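(* Let $a\geq 3$ and $m\geq 2a^2-a+2$ be integers, and suppose $[C(m,a)]$ is colored with red and blue so that there is no monochromatic solution of $L(m,a)$ in $[C(m,a)]$, with $a-2$ red and $a-1$ blue. Then $a$ is red and $m-1$ is blue.
   Context: For integers $m\geq 3$, $a\geq 1$, $L(m,a)$ denotes the equation $x_1+x_2+\cdots+x_{m-1}=a x_m$. For a positive integer $n$, $[n]=\{1,\dots,n\}$. A solution of $L(m,a)$ in $[n]$ is an $m$-tuple $(x_1,\dots,x_m)\in[n]^m$ (entries not necessarily distinct) satisfying the equation; given a 2-coloring of $[n]$, it is monochromatic if all $x_i$ have the same color. $C(m,a)$ denotes $\left\lceil \frac{m-1}{a}\left\lceil \frac{m-1}{a}\right\rceil\right\rceil$. *)

(* Defs.v *)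
From mathcomp Require Import all_boot.
Unset Printing Implicit Defensive.

Definition ceil_div (p q : nat) : nat := (p + q - 1) %/ q.

(* C(m,a) = ceil( (m-1)/a * ceil((m-1)/a) ) = ceil( (m-1) * ceil((m-1)/a) / a ) *)
Definition Cma (m a : nat) : nat := ceil_div ((m - 1) * ceil_div (m - 1) a) a.

(* an m-tuple (x_0,...,x_{m-1}) in [n]^m solving
   x_0 + ... + x_{m-2} = a * x_{m-1} *)
Definition is_solution (m a n : nat) (x : 'I_m -> nat) : Prop :=
  (forall i, 1 <= x i <= n) /\
  \sum_(i < m | i.+1 < m) x i = a * \sum_(i < m | i.+1 == m) x i.

(* a 2-colouring of [n] given by col : nat -> bool (true = red, false = blue);
   only its values on [n] matter *)
Definition monochromatic (m : nat) (col : nat -> bool) (x : 'I_m -> nat) : Prop :=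
  exists c : bool, forall i, col (x i) = c.

Definition no_mono_solution (m a n : nat) (col : nat -> bool) : Prop :=
  forall x : 'I_m -> nat, is_solution m a n x -> ~ monochromatic m col x.

(* Main.v *)
Require Import Defs.
From mathcomp Require Import all_boot zify.

Lemma sum_const_nat (lo hi v : nat) (F : nat -> nat) :
  (forall i, lo <= i < hi -> F i = v) -> \sum_(lo <= i < hi) F i = (hi - lo) * v.
Proof.
move=> H; rewrite (eq_big_nat _ _ H) sum_nat_const_nat //.
Qed.

Definition F3 (k1 k2 v1 v2 v3 i : nat) : nat :=
  if i < k1 then v1 else if i < k1 + k2 then v2 else v3.

Lemma sumF3 N k1 k2 v1 v2 v3 : k1 + k2 <= N ->
  \sum_(0 <= i < N) F3 k1 k2 v1 v2 v3 i = k1*v1 + k2*v2 + (N-k1-k2)*v3.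
Proof.
move=> H.
rewrite (big_cat_nat _ (n:=k1)) //=; last lia.
rewrite (big_cat_nat _ (m:=k1) (n:=k1+k2)) //=; last lia.
rewrite (sum_const_nat _ _ v1); last by move=> i Hi; rewrite /F3; case: ifP => ?; try case: ifP => ?; lia.
rewrite (sum_const_nat _ _ v2); last by move=> i Hi; rewrite /F3; case: ifP => ?; try case: ifP => ?; lia.
rewrite (sum_const_nat _ _ v3); last by move=> i Hi; rewrite /F3; case: ifP => ?; try case: ifP => ?; lia.
have -> : k1 + k2 - k1 = k2 by lia.
have -> : N - (k1 + k2) = N - k1 - k2 by lia.
by rewrite subn0 addnA.
Qed.

Lemma sol3 m' a n k1 k2 v1 v2 v3 X :
  k1 + k2 <= m' ->
  k1*v1 + k2*v2 + (m'-k1-k2)*v3 = a*X ->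
  (forall i, 1 <= F3 k1 k2 v1 v2 v3 i <= n) -> 1 <= X <= n ->
  is_solution m'.+1 a n (fun i => if val i == m' then X else F3 k1 k2 v1 v2 v3 i).
Proof.
move=> Hk Heq Hb HX; split.
  by move=> i; case: ifP.
have -> : \sum_(i < m'.+1 | i.+1 == m'.+1)
   (if val i == m' then X else F3 k1 k2 v1 v2 v3 i) = X.
  rewrite (big_pred1 ord_max); first by rewrite /= eqxx.
  by move=> i; rewrite /= eqSS.
rewrite -Heq -(@sumF3 m' k1 k2 v1 v2 v3 Hk) big_mkcond big_ord_recr /= ltnn addn0.
rewrite big_mkord.
apply: eq_bigr => i _.
have Hi := ltn_ord i.
rewrite /= ltnS Hi /=; have -> : (i == m' :> nat) = false by lia.
done.
Qed.

Lemma Cma_ge m a : 1 <= a -> a * a <= m - 1 -> m - 1 <= Cma m a.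
Proof.
move=> Ha Hm; rewrite /Cma /ceil_div.
have Hc : a <= (m - 1 + a - 1) %/ a by rewrite leq_divRL //; nia.
rewrite leq_divRL //; nia.
Qed.

Lemma mono3 (col : nat -> bool) c m' k1 k2 v1 v2 v3 X :
  col X = c -> col v1 = c -> col v2 = c -> col v3 = c ->
  forall i : 'I_m'.+1, col (if val i == m' then X else F3 k1 k2 v1 v2 v3 i) = c.
Proof.
move=> HX H1 H2 H3 i; case: ifP => // _; rewrite /F3; by do ?case: ifP.
Qed.

Theorem lemma3 (m a : nat) (col : nat -> bool) :
  3 <= a ->
  2 * a ^ 2 - a + 2 <= m ->
  no_mono_solution m a (Cma m a) col ->
  col (a - 2) = true ->
  col (a - 1) = false ->
  col a = true /\ col (m - 1) = false.
Proof.
move=> Ha Hm Hno Hr Hb.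
have Hm2 : 2 * a * a - a + 2 <= m by move: Hm; rewrite expnS expn1 mulnA.
move: Hm2 => Hm2.
have HC := @Cma_ge m a ltac:(lia) ltac:(nia).
move: HC Hno; case: m Hm Hm2 => [|m'] Hm Hm2; first by nia.
rewrite subn1 /= => HC Hno.
have Hm3 : 2 * a + 2 <= m' by nia.
have Hca' : col a = true.
  case Hca: (col a) => //.
  case Hc3: (col (m' - 2)).
  + have Hs := @sol3 m' a (Cma m'.+1 a) (m' - 2) 2 (a - 2) (m' - 2) (a - 2) (m' - 2)
      ltac:(lia) ltac:(nia).
    case: (Hno _ (Hs _ _)).
    * by move=> i; rewrite /F3; do ?case: ifP => _; lia.
    * lia.
    * by exists true; apply: mono3.
  + have Hs := @sol3 m' a (Cma m'.+1 a) (m' - 2 * a) (2 * a) a (a - 1) a (m' - 2)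
      ltac:(lia) ltac:(nia).
    case: (Hno _ (Hs _ _)).
    * by move=> i; rewrite /F3; do ?case: ifP => _; lia.
    * lia.
    * by exists false; apply: mono3.
split => //.
  case Hc1: (col m') => //.
  have Hs := @sol3 m' a (Cma m'.+1 a) 2 (a - 2) m' a (a - 2) m'
      ltac:(lia) ltac:(nia).
  case: (Hno _ (Hs _ _)).
  * by move=> i; rewrite /F3; do ?case: ifP => _; lia.
  * lia.
  * by exists true; apply: mono3.
Qed.
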